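(* For $R_1,R_2\in\mathrm{DGRings}^{0,-1}$, the category $\mathrm{Corr}_{\mathrm{adm}}(R_1,R_2)$ is a groupoid.
   Context: Rings are commutative and unital. $\mathrm{DGRings}^{0,-1}$ is the category of commutative DG rings $R$ with $R^i=0$ for $i\ne 0,-1$. Equivalently, such $R$ is a ring $R^0$, an $R^0$-module $R^{-1}$ and an $R^0$-linear $d:R^{-1}\to R^0$ with $d(x)y=d(y)x$. A morphism is a quasi-isomorphism if it induces isomorphisms on $\ker d$ and $\operatorname{coker} d$. A correspondence from $R_1$ to $R_2$ is a diagram $R_1\xleftarrow{f}R_{12}\xrightarrow{g}R_2$ in $\mathrm{DGRings}^{0,-1}$. A morphism from it to $R_1\xleftarrow{f'}R'_{12}\xrightarrow{g'}R_2$ is a morphism $h:R_{12}\to R'_{12}$ with $f'h=f$, $g'h=g$. The correspondence is admissible if $f$ is a quasi-isomorphism and the map $R_{12}^{-1}\to R_1^{-1}\times R_2^{-1}$ is an isomorphism. $\mathrm{Corr}_{\mathrm{adm}}(R_1,R_2)$ is the full subcategory of admissible correspondences. *)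

(* Defs.v *)
From HB Require Import structures.
From mathcomp Require Import all_boot all_order all_algebra.
Set Implicit Arguments.
Unset Strict Implicit. Unset Printing Implicit Defensive.
Import GRing.Theory.
Local Open Scope ring_scope.

(* A commutative DG ring concentrated in degrees 0 and -1:
   a commutative unital ring R^0 (zero ring allowed), an R^0-module R^{-1},
   and an R^0-linear d : R^{-1} -> R^0 with d(x) y = d(y) x. *)
Record DGR01 := {
  R0 : comPzRingType;
  R1 : lmodType R0;
  dd : R1 -> R0;
  dd_add : forall x y : R1, dd (x + y) = dd x + dd y;
  dd_scale : forall (r : R0) (x : R1), dd (r *: x) = r * dd x;
  dd_sym : forall x y : R1, dd x *: y = dd y *: x
}.
Arguments dd : clear implicits.

Record DGHom (R S : DGR01) := {
  hom0 : R0 R -> R0 S;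
  hom1 : R1 R -> R1 S;
  hom0_one : hom0 1 = 1;
  hom0_add : forall a b, hom0 (a + b) = hom0 a + hom0 b;
  hom0_mul : forall a b, hom0 (a * b) = hom0 a * hom0 b;
  hom1_add : forall x y, hom1 (x + y) = hom1 x + hom1 y;
  hom1_scale : forall (r : R0 R) x, hom1 (r *: x) = hom0 r *: hom1 x;
  hom_dd : forall x, dd S (hom1 x) = hom0 (dd R x)
}.

Definition DGHom_eq (R S : DGR01) (f g : DGHom R S) : Prop :=
  (forall a, hom0 f a = hom0 g a) /\ (forall x, hom1 f x = hom1 g x).

Definition DGHom_comp (R S T : DGR01) (g : DGHom S T) (f : DGHom R S) :
  DGHom R T.
Proof.
refine (@Build_DGHom R T (fun a => hom0 g (hom0 f a))
                         (fun x => hom1 g (hom1 f x)) _ _ _ _ _ _).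
- by rewrite !hom0_one.
- by move=> a b; rewrite !hom0_add.
- by move=> a b; rewrite !hom0_mul.
- by move=> x y; rewrite !hom1_add.
- by move=> r x; rewrite !hom1_scale.
- by move=> x; rewrite !hom_dd.
Defined.

Definition DGHom_id (R : DGR01) : DGHom R R.
Proof.
by refine (@Build_DGHom R R (fun a => a) (fun x => x) _ _ _ _ _ _).
Defined.

(* Quasi-isomorphism: the induced maps on H^{-1} = ker d and
   H^0 = coker d = R^0 / im d are bijective (written out explicitly). *)
Definition quasi_iso (R S : DGR01) (f : DGHom R S) : Prop :=
  (forall x : R1 R, dd R x = 0 -> hom1 f x = 0 -> x = 0) /\
  (forall y : R1 S, dd S y = 0 -> exists x : R1 R, dd R x = 0 /\ hom1 f x = y) /\
  (* H^0: injective *)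
  (forall r : R0 R, (exists y : R1 S, hom0 f r = dd S y) ->
                    exists x : R1 R, r = dd R x) /\
  (forall s : R0 S, exists (r : R0 R) (y : R1 S), s = hom0 f r + dd S y).

Record Corr (A B : DGR01) := {
  apex : DGR01;
  cleft : DGHom apex A;
  cright : DGHom apex B
}.

Definition admissible (A B : DGR01) (C : Corr A B) : Prop :=
  quasi_iso (cleft C) /\
  bijective (fun x : R1 (apex C) => (hom1 (cleft C) x, hom1 (cright C) x)).

Definition corr_mor (A B : DGR01) (C C' : Corr A B) (h : DGHom (apex C) (apex C'))
  : Prop :=
  DGHom_eq (DGHom_comp (cleft C') h) (cleft C) /\
  DGHom_eq (DGHom_comp (cright C') h) (cright C).

(* Main.v *)
Require Import Defs.
From HB Require Import structures.
From mathcomp Require Import all_boot all_order all_algebra.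
Import GRing.Theory.
Local Open Scope ring_scope.

Lemma addf_sub {U V : zmodType} {f : U -> V} :
  (forall x y, f (x + y) = f x + f y) -> forall x y, f (x - y) = (f x - f y)%R.
Proof.
move=> fD x y.
have f0 : f 0%R = 0%R by apply/(addrI (f 0%R)); rewrite -fD !addr0.
have fN : f (- y)%R = (- f y)%R by apply/(addrI (f y)); rewrite -fD !subrr.
by rewrite fD fN.
Qed.

Lemma addf0 {U V : zmodType} {f : U -> V} :
  (forall x y, f (x + y) = f x + f y) -> f 0 = 0.
Proof. by move=> fD; apply/(addrI (f 0)); rewrite -fD !addr0. Qed.

Theorem lemma4p2p4 (A B : DGR01) (C C' : Corr A B)
  (h : DGHom (apex C) (apex C')) :
  admissible C -> admissible C' -> corr_mor h ->
  exists h' : DGHom (apex C') (apex C),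
    corr_mor h' /\
    DGHom_eq (DGHom_comp h' h) (DGHom_id (apex C)) /\
    DGHom_eq (DGHom_comp h h') (DGHom_id (apex C')).
Proof.
move=> [[qi1 [qi2 [qi3 qi4]]] [k kK Kk]] [[qi1' [qi2' [qi3' qi4']]] [k' kK' Kk']].
move=> [[/= hf0 hf1] [/= hg0 hg1]].
have h1inj : injective (hom1 h).
  move=> x y E; apply: (can_inj kK) => /=.
  by rewrite -hf1 -hg1 -(hf1 y) -(hg1 y) /= E.
have h1surj : forall y, exists x, (hom1 h) x == y.
  move=> y; exists (k (hom1 (cleft C') y, hom1 (cright C') y)); apply/eqP.
  apply: (can_inj kK') => /=.
  set x := k _.
  have := Kk (hom1 (cleft C') y, hom1 (cright C') y); rewrite -/x => /pair_equal_spec [E1 E2].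
  by rewrite hf1 hg1 E1 E2.
have h0sub := addf_sub (hom0_add h).
have h1sub := addf_sub (hom1_add h).
have fsub' := addf_sub (hom1_add (cleft C')).
have ddsub C0 := addf_sub (@dd_add C0).
have kerl : forall x, dd _ ((hom1 h) x) = 0%R -> dd _ x = 0%R.
  move=> x Hx.
  have : dd A (hom1 (cleft C') ((hom1 h) x)) = 0%R by rewrite hom_dd Hx (addf0 (hom0_add _)).
  rewrite hf1 => /qi2 [x0 [Hx0 Ex0]].
  suff -> : x = x0 by [].
  apply: h1inj; apply/eqP; rewrite -subr_eq0; apply/eqP.
  rewrite -h1sub; apply: qi1'.
    by rewrite h1sub ddsub Hx hom_dd Hx0 (addf0 (hom0_add _)) subrr.
  by rewrite hf1 (addf_sub (hom1_add _)) Ex0 subrr.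
have h0inj : injective (hom0 h).
  move=> a b E; apply/eqP; rewrite -subr_eq0; apply/eqP.
  have E0 : (hom0 h) (a - b)%R = 0%R by rewrite h0sub E subrr.
  have : exists y, hom0 (cleft C) (a - b)%R = dd A y.
    exists 0%R; rewrite -hf0 E0.
    by rewrite (addf0 (@dd_add A)) (addf0 (hom0_add _)).
  move=> /qi3 [x Ex]; rewrite Ex; apply: kerl.
  by rewrite hom_dd -Ex E0.
have h0surj : forall s, exists r, (hom0 h) r == s.
  move=> s; have [r [y Ey]] := qi4 (hom0 (cleft C') s).
  have : exists y, hom0 (cleft C') (s - (hom0 h) r)%R = dd A y.
    by exists y; rewrite (addf_sub (hom0_add _)) hf0 Ey addrC addKr.
  move=> /qi3' [y' Ey']; have [x /eqP Ex] := h1surj y'.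
  exists (r + dd _ x)%R; apply/eqP; rewrite hom0_add -hom_dd Ex -Ey'.
  by rewrite addrC subrK.
pose g0 s := xchoose (h0surj s).
pose g1 y := xchoose (h1surj y).
have g0K : forall s, (hom0 h) (g0 s) = s by move=> s; apply/eqP; exact: (xchooseP (h0surj s)).
have g1K : forall y, (hom1 h) (g1 y) = y by move=> y; apply/eqP; exact: (xchooseP (h1surj y)).
have Kg0 : forall r, g0 ((hom0 h) r) = r by move=> r; apply: h0inj; rewrite g0K.
have Kg1 : forall x, g1 ((hom1 h) x) = x by move=> x; apply: h1inj; rewrite g1K.
have p1 : g0 1%R = 1%R by apply: h0inj; rewrite g0K hom0_one.
have p2 : forall a b, g0 (a + b)%R = (g0 a + g0 b)%R.
  by move=> a b; apply: h0inj; rewrite hom0_add !g0K.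
have p3 : forall a b, g0 (a * b)%R = (g0 a * g0 b)%R.
  by move=> a b; apply: h0inj; rewrite hom0_mul !g0K.
have p4 : forall x y, g1 (x + y)%R = (g1 x + g1 y)%R.
  by move=> a b; apply: h1inj; rewrite hom1_add !g1K.
have p5 : forall r x, g1 (r *: x)%R = (g0 r *: g1 x)%R.
  by move=> a b; apply: h1inj; rewrite hom1_scale !g1K g0K.
have p6 : forall x, dd _ (g1 x) = g0 (dd _ x).
  by move=> x; apply: h0inj; rewrite g0K -hom_dd g1K.
exists (Build_DGHom p1 p2 p3 p4 p5 p6).
split; [split; split => /= |split; split => /=].
- by move=> a; rewrite -hf0 g0K.
- by move=> a; rewrite -hf1 g1K.
- by move=> a; rewrite -hg0 g0K.
- by move=> a; rewrite -hg1 g1K.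
- exact: Kg0.
- exact: Kg1.
- exact: g0K.
- exact: g1K.
Qed.
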